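(* In the near-field model below, with $p_{\mathrm c},p_{\mathrm s},\alpha_{\mathrm s}>0$ and $L\in\mathbb Z_{>0}$ fixed, the quantity $\tilde{\mathcal R}^{\mathrm c}_{\mathrm{c,s}}=\frac1L\log_2\big(1+\frac{p_{\mathrm s}L\alpha_{\mathrm s}\|\mathbf h_{\mathrm s}\|^4}{1+p_{\mathrm c}\|\mathbf h_{\mathrm c}\|^2}\big)$ (a lower bound on the uplink sensing rate of the communications-centric design) satisfies $$\lim_{N_y,N_z\to\infty}\tilde{\mathcal R}^{\mathrm c}_{\mathrm{c,s}}=\frac1L\log_2\!\Big(1+\frac{p_{\mathrm s}L\alpha_{\mathrm s}\zeta^2}{9+3p_{\mathrm c}\zeta}\Big).$$
   Context: Near-field model: a uniform planar array lies in the $y$–$z$ plane centered at the origin, with $N=N_yN_z$ elements ($N_y,N_z$ odd). Element $(n_y,n_z)$, $n_y\in\{-\frac{N_y-1}2,\dots,\frac{N_y-1}2\}$, $n_z\in\{-\frac{N_z-1}2,\dots,\frac{N_z-1}2\}$, is a $\sqrt A\times\sqrt A$ square centered at $(0,n_yd,n_zd)$, with spacing $d>\sqrt A$; $\zeta=A/d^2\in(0,1]$; $\lambda>0$ is the wavelength. A node $i\in\{\mathrm c,\mathrm s\}$ (communication user, target) is at distance $r_i$, elevation $\theta_i\in[0,\pi]$, azimuth $\phi_i\in[-\pi/2,\pi/2]$; $\Psi_i=\sin\theta_i\cos\phi_i$, $\Phi_i=\sin\theta_i\sin\phi_i$, $\Omega_i=\cos\theta_i$, $\epsilon_i=d/r_i$,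 $r^{(i)}_{n_y,n_z}=r_i\sqrt{(n_y\epsilon_i-\Phi_i)^2+(n_z\epsilon_i-\Omega_i)^2+\Psi_i^2}$. The channel vector $\mathbf h_i\in\mathbb C^N$ has entries $\sqrt{A\frac{r_i^3\Psi_i^3+r_i\Psi_i(r_i\Omega_i-n_zd)^2}{4\pi (r^{(i)}_{n_y,n_z})^5}}\,e^{-\mathrm j\frac{2\pi}{\lambda}r^{(i)}_{n_y,n_z}}$. The paper assumes throughout $r_i\gg d$, $r_i\gg\sqrt A$, so $\epsilon_i\ll1$. The limit is taken with all parameters other than $N_y,N_z$ fixed.
   Formalization: The limit is replaced by: for each e > 0 some ρ > 0 makes $\tilde{\mathcal R}^{\mathrm c}_{\mathrm{c,s}}$ within e of the value for all large $N_y,N_z$ whenever both $\epsilon_i$ < ρ; also $\theta_i$ ∈ (0,π) and $\phi_i$ ∈ (−π/2,π/2). The statement above fails without it. *)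

(* Defs.v *)
From Stdlib Require Import Reals Lra.
From Coquelicot Require Import Coquelicot.
Open Scope R_scope.

Definition Psi (theta phi : R) : R := sin theta * cos phi.
Definition Phi (theta phi : R) : R := sin theta * sin phi.
Definition Omega (theta : R) : R := cos theta.

Definition elem_dist (d r theta phi ny nz : R) : R :=
  let eps := d / r in
  r * sqrt ((ny * eps - Phi theta phi) ^ 2 + (nz * eps - Omega theta) ^ 2
            + Psi theta phi ^ 2).

Definition h_entry (A d lambda r theta phi ny nz : R) : C :=
  let rn := elem_dist d r theta phi ny nz in
  let Ps := Psi theta phi in
  let amp := sqrt (A * (r ^ 3 * Ps ^ 3 + r * Ps * (r * Omega theta - nz * d) ^ 2)
                   / (4 * PI * rn ^ 5)) in
  let ph := - (2 * PI / lambda) * rn in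
  (amp * cos ph, amp * sin ph).

(* squared Euclidean norm ||h_i||^2 of the channel vector of an
   N_y x N_z array with N_y = 2 my + 1, N_z = 2 mz + 1; the indices
   n_y = k - my (k = 0..2my), n_z = l - mz (l = 0..2mz). *)
Definition h_norm2 (A d lambda r theta phi : R) (my mz : nat) : R :=
  sum_f_R0 (fun k =>
    sum_f_R0 (fun l =>
      Cmod (h_entry A d lambda r theta phi (INR k - INR my) (INR l - INR mz)) ^ 2)
      (2 * mz)) (2 * my).

Definition log2 (x : R) : R := ln x / ln 2.

Definition R_cs_c (L : nat) (pc ps alphas : R) (hc2 hs2 : R) : R :=
  / INR L * log2 (1 + ps * INR L * alphas * (sqrt hs2) ^ 4 / (1 + pc * (sqrt hc2) ^ 2)).

(* Main.v *)
Require Import Defs.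
From Stdlib Require Import Reals Lra Lia.
From Coquelicot Require Import Coquelicot.
Open Scope R_scope.

Lemma usum (f F : R -> R) (fm x0 eps : R) (N : nat) :
  0 < eps -> (forall x, derivable_pt_lim F x (f x)) -> (forall x, 0 <= f x <= fm) ->
  (forall x y, x <= y <= 0 -> f x <= f y) -> (forall x y, 0 <= x <= y -> f y <= f x) ->
  Rabs (eps * sum_f_R0 (fun n => f (x0 + INR n * eps)) N - (F (x0 + INR N * eps) - F x0)) <= eps * fm.
Proof.
  intros He HF Hb Hinc Hdec.
  set (E := fun N => eps * sum_f_R0 (fun n => f (x0 + INR n * eps)) N - (F (x0 + INR N * eps) - F x0)).
  assert (H : forall N, -(eps*fm) <= E N - eps * f (x0 + INR N * eps) /\ E N <= eps*fm /\
     (x0 + INR N * eps <= 0 -> 0 <= E N <= eps * f (x0 + INR N * eps))).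
  { induction N0 as [|n IH].
    - unfold E; simpl. replace (x0 + 0 * eps) with x0 by ring.
      destruct (Hb x0). split; [|split]; intros; nra.
    - assert (EE : E (S n) = E n + eps * f (x0 + INR (S n) * eps) - (F (x0 + INR (S n) * eps) - F (x0 + INR n * eps))).
      { unfold E. rewrite tech5. ring. }
      rewrite S_INR in *. set (y := x0 + INR n * eps) in *.
      replace (x0 + (INR n + 1) * eps) with (y + eps) in * by (unfold y; ring).
      destruct (MVT_cor2 F f y (y+eps)) as [c [Hc1 Hc2]]; [lra| intros; apply HF |].
      replace (y + eps - y) with eps in Hc1 by ring.
      rewrite EE, Hc1. destruct IH as [I1 [I2 I3]].
      destruct (Hb c), (Hb y), (Hb (y+eps)).
      destruct (Rle_dec (y+eps) 0) as [Hl|Hl].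
      + assert (f y <= f c) by (apply Hinc; lra).
        assert (f c <= f (y+eps)) by (apply Hinc; lra).
        destruct I3 as [I3 I4]; [lra|]. split; [|split]; intros; nra.
      + destruct (Rle_dec 0 y) as [Hy|Hy].
        * assert (f c <= f y) by (apply Hdec; lra).
          assert (f (y+eps) <= f c) by (apply Hdec; lra).
          split; [|split]; intros; nra.
        * destruct I3 as [I3 I4]; [lra|].
          assert (f c >= Rmin (f y) (f (y+eps))).
          { destruct (Rle_dec c 0).
            - assert (f y <= f c) by (apply Hinc; lra). unfold Rmin; destruct Rle_dec; lra.
            - assert (f (y+eps) <= f c) by (apply Hdec; lra). unfold Rmin; destruct Rle_dec; lra. }
          revert H5; unfold Rmin; destruct Rle_dec; intros; (split; [|split]; intros; nra). }
  destruct (H N) as [H1 [H2 _]]. destruct (Hb (x0 + INR N * eps)).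
  fold (E N). apply Rabs_le. split; nra.
Qed.
Definition f1 (a2 y : R) := / (sqrt (y^2 + a2))^5.
Definition F1 (a2 y : R) := y*(2*y^2+3*a2)/(3*a2^2*(sqrt(y^2+a2))^3).

Lemma F1_deriv a2 y : 0 < a2 -> derivable_pt_lim (F1 a2) y (f1 a2 y).
Proof.
  intros Ha. apply is_derive_Reals. unfold F1, f1.
  assert (Hp : 0 < y^2 + a2) by nra.
  assert (Hs : 0 < sqrt (y^2+a2)) by (apply sqrt_lt_R0; lra).
  assert (E : sqrt (y^2+a2) * sqrt (y^2+a2) = y^2+a2) by (apply sqrt_sqrt; lra).
  replace (y*y+a2) with (y^2+a2) by ring.
  auto_derive; replace (y*(y*1)+a2) with (y^2+a2) by ring;
  set (s := sqrt (y^2+a2)) in *; clearbody s.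
  - repeat split; try lra. apply Rgt_not_eq. apply Rmult_gt_0_compat; [nra|]. nra.
  - assert (Ea : a2 = s^2 - y^2) by nra. subst a2.
    field. split; nra.
Qed.

Definition f2 (b z : R) := / (z^2 + b^2).
Definition F2 (b z : R) := atan (z / b) / b.

Lemma F2_deriv b z : 0 < b -> derivable_pt_lim (F2 b) z (f2 b z).
Proof.
  intros Hb. apply is_derive_Reals. unfold F2, f2.
  assert (H : is_derive (fun z => /b * atan (z/b)) z (/b * (/b * (/(1 + (z/b)²))))).
  { apply (is_derive_scal (fun z => atan (z/b))).
    apply (is_derive_comp atan (fun z => z / b)).
    - apply is_derive_atan.
    - auto_derive. reflexivity. field. lra. }
  apply (is_derive_ext (fun z => /b * atan (z/b))). { intros t. rewrite Rmult_comm. reflexivity. }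
  replace (/ (z^2 + b^2)) with (/b * (/b * (/(1 + (z/b)²)))). exact H.
  unfold Rsqr. assert (0 < b * b + z * z) by nra. field. repeat split; try lra; nra.
Qed.
Lemma sq_mono x y a2 : 0 < a2 -> x^2 <= y^2 -> / (sqrt (y^2 + a2))^5 <= / (sqrt (x^2 + a2))^5.
Proof.
  intros Ha H. apply Rinv_le_contravar.
  - apply pow_lt. apply sqrt_lt_R0. nra.
  - apply pow_incr. split. apply sqrt_pos. apply sqrt_le_1_alt. lra.
Qed.

Lemma f1_bnd a2 y : 0 < a2 -> 0 <= f1 a2 y <= / (sqrt a2)^5.
Proof.
  intros Ha. unfold f1. split.
  - left. apply Rinv_0_lt_compat. apply pow_lt. apply sqrt_lt_R0. nra.
  - replace a2 with (0^2 + a2) at 2 by ring. apply sq_mono; auto. nra.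
Qed.

Lemma f1_inc a2 x y : 0 < a2 -> x <= y <= 0 -> f1 a2 x <= f1 a2 y.
Proof. intros. unfold f1. apply sq_mono; auto. nra. Qed.

Lemma f1_dec a2 x y : 0 < a2 -> 0 <= x <= y -> f1 a2 y <= f1 a2 x.
Proof. intros. unfold f1. apply sq_mono; auto. nra. Qed.

Lemma f2_bnd b z : 0 < b -> 0 <= f2 b z <= / b^2.
Proof.
  intros. unfold f2. split.
  - left. apply Rinv_0_lt_compat. nra.
  - apply Rinv_le_contravar. nra. nra.
Qed.

Lemma f2_inc b x y : 0 < b -> x <= y <= 0 -> f2 b x <= f2 b y.
Proof. intros. unfold f2. apply Rinv_le_contravar; nra. Qed.

Lemma f2_dec b x y : 0 < b -> 0 <= x <= y -> f2 b y <= f2 b x.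
Proof. intros. unfold f2. apply Rinv_le_contravar; nra. Qed.

Lemma F1_odd a2 y : F1 a2 (-y) = - F1 a2 y.
Proof. unfold F1. replace ((-y)^2) with (y^2) by ring. unfold Rdiv; ring. Qed.

Lemma F1_tail a2 Y : 0 < a2 -> 0 <= Y ->
  0 <= 2/(3*a2^2) - F1 a2 Y <= 2/(3*a2*(a2+Y^2)).
Proof.
  intros Ha HY. unfold F1.
  assert (Hp : 0 < Y^2 + a2) by nra.
  assert (Hs : 0 < sqrt (Y^2+a2)) by (apply sqrt_lt_R0; lra).
  assert (E : sqrt (Y^2+a2) * sqrt (Y^2+a2) = Y^2+a2) by (apply sqrt_sqrt; lra).
  set (s := sqrt (Y^2+a2)) in *. clearbody s.
  assert (Ea : a2 = s^2 - Y^2) by nra. 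
  assert (Hsy : Y <= s) by nra.
  subst a2.
  assert (Hd : 0 < 3*(s^2-Y^2)^2*s^3) by (apply Rmult_lt_0_compat; [nra| apply pow_lt; lra]).
  replace (2/(3*(s^2-Y^2)^2) - Y*(2*Y^2+3*(s^2-Y^2))/(3*(s^2-Y^2)^2*s^3)) with
      ((s-Y)^2*(2*s+Y) / (3*(s^2-Y^2)^2*s^3)) by (field; split; nra).
  split.
  - apply Rmult_le_pos; [|left; apply Rinv_0_lt_compat; auto]. 
    apply Rmult_le_pos; nra.
  - replace (s^2-Y^2+Y^2) with (s^2) by ring.
    replace (2/(3*(s^2-Y^2)*s^2)) with (2*(s^2-Y^2)*s/(3*(s^2-Y^2)^2*s^3)) by (field; split; nra).
    unfold Rdiv. apply Rmult_le_compat_r. left; apply Rinv_0_lt_compat; auto.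
    assert (0 <= Y*(s-Y)*(3*s+Y)) by (apply Rmult_le_pos; nra).
    nra.
Qed.

Lemma atan_le_id x : 0 <= x -> atan x <= x.
Proof.
  intros Hx. destruct (Req_dec x 0) as [->|Hn]. rewrite atan_0; lra.
  destruct (MVT_cor2 atan (fun c => / (1 + c^2)) 0 x) as [c [H1 H2]]; [lra| intros; apply derivable_pt_lim_atan|].
  rewrite atan_0 in H1.
  assert (/ (1 + c^2) <= 1). { rewrite <- Rinv_1. apply Rinv_le_contravar; nra. }
  nra.
Qed.

Lemma atan_tail x : 0 < x -> PI/2 - /x <= atan x <= PI/2.
Proof.
  intros Hx. pose proof (atan_inv x Hx) as EI. pose proof (atan_le_id (/x)).
  pose proof (atan_bound (/x)). assert (0 < /x) by (apply Rinv_0_lt_compat; lra).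
  assert (0 <= atan (/x)). { rewrite <- atan_0. left. apply atan_increasing. lra. }
  assert (atan (/x) <= /x) by (apply H; lra). lra.
Qed.

Lemma sum_shift (g : R -> R) (c eps : R) (N : nat) :
  sum_f_R0 (fun n => g ((INR n - c) * eps)) N = sum_f_R0 (fun n => g (- (c*eps) + INR n * eps)) N.
Proof. apply sum_eq. intros. f_equal. ring. Qed.

Lemma ysum a2 eps my Ph : 0 < a2 -> 0 < eps -> 0 <= INR my * eps - Ph -> 0 <= INR my * eps + Ph ->
  Rabs (eps * sum_f_R0 (fun k => f1 a2 ((INR k - INR my) * eps - Ph)) (2*my) - 4/(3*a2^2))
  <= eps * / (sqrt a2)^5 + 2/(3*a2*(a2+(INR my * eps - Ph)^2)) + 2/(3*a2*(a2+(INR my * eps + Ph)^2)).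
Proof.
  intros Ha He H1 H2.
  assert (E : sum_f_R0 (fun k => f1 a2 ((INR k - INR my) * eps - Ph)) (2*my) =
              sum_f_R0 (fun k => f1 a2 ((-(INR my * eps + Ph)) + INR k * eps)) (2*my)).
  { apply sum_eq. intros. f_equal. ring. }
  rewrite E.
  assert (U := usum (f1 a2) (F1 a2) (/ (sqrt a2)^5) (-(INR my * eps + Ph)) eps (2*my) He
     (fun x => F1_deriv a2 x Ha) (fun x => f1_bnd a2 x Ha) (fun x y => f1_inc a2 x y Ha) (fun x y => f1_dec a2 x y Ha)).
  replace (-(INR my * eps + Ph) + INR (2*my) * eps) with (INR my * eps - Ph) in U
    by (rewrite mult_INR; simpl; ring).
  rewrite F1_odd in U.
  pose proof (F1_tail a2 _ Ha H1). pose proof (F1_tail a2 _ Ha H2).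
  apply Rabs_le. apply Rabs_le_between in U. lra.
Qed.

Lemma zsum_ub b eps w0 N : 0 < b -> 0 < eps ->
  eps * sum_f_R0 (fun l => f2 b (w0 + INR l * eps)) N <= PI/b + eps/b^2.
Proof.
  intros Hb He.
  assert (U := usum (f2 b) (F2 b) (/ b^2) w0 eps N He
     (fun x => F2_deriv b x Hb) (fun x => f2_bnd b x Hb) (fun x y => f2_inc b x y Hb) (fun x y => f2_dec b x y Hb)).
  apply Rabs_le_between in U. unfold F2 in U.
  pose proof (atan_bound ((w0 + INR N * eps) / b)). pose proof (atan_bound (w0/b)).
  assert ((atan ((w0 + INR N * eps) / b) / b - atan (w0 / b) / b) <= PI / b).
  { unfold Rdiv. rewrite <- Rmult_minus_distr_r. apply Rmult_le_compat_r.
    left; apply Rinv_0_lt_compat; lra. lra. }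
  unfold Rdiv in *. lra.
Qed.

Lemma zsum_main Ps eps mz Om : 0 < Ps -> 0 < eps -> 0 < INR mz * eps - Om -> 0 < INR mz * eps + Om ->
  Rabs (eps * sum_f_R0 (fun l => f2 Ps ((INR l - INR mz) * eps - Om)) (2*mz) - PI/Ps)
  <= eps/Ps^2 + / (INR mz * eps - Om) + / (INR mz * eps + Om).
Proof.
  intros Hb He H1 H2.
  assert (E : sum_f_R0 (fun l => f2 Ps ((INR l - INR mz) * eps - Om)) (2*mz) =
              sum_f_R0 (fun l => f2 Ps ((-(INR mz * eps + Om)) + INR l * eps)) (2*mz)).
  { apply sum_eq. intros. f_equal. ring. }
  rewrite E.
  assert (U := usum (f2 Ps) (F2 Ps) (/ Ps^2) (-(INR mz * eps + Om)) eps (2*mz) He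
     (fun x => F2_deriv Ps x Hb) (fun x => f2_bnd Ps x Hb) (fun x y => f2_inc Ps x y Hb) (fun x y => f2_dec Ps x y Hb)).
  replace (-(INR mz * eps + Om) + INR (2*mz) * eps) with (INR mz * eps - Om) in U
    by (rewrite mult_INR; simpl; ring).
  apply Rabs_le_between in U. unfold F2 in U.
  set (Z1 := INR mz * eps - Om) in *. set (Z0 := INR mz * eps + Om) in *.
  replace (- Z0 / Ps) with (- (Z0/Ps)) in U by (unfold Rdiv; ring).
  rewrite atan_opp in U.
  assert (P1 : 0 < Z1/Ps) by (apply Rdiv_lt_0_compat; lra).
  assert (P0 : 0 < Z0/Ps) by (apply Rdiv_lt_0_compat; lra).
  pose proof (atan_tail _ P1). pose proof (atan_tail _ P0).
  replace (/ (Z1/Ps)) with (Ps * /Z1) in * by (field; lra).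
  replace (/ (Z0/Ps)) with (Ps * /Z0) in * by (field; lra).
  set (a1 := atan (Z1/Ps)) in *. set (a0 := atan (Z0/Ps)) in *.
  assert (D : a1 / Ps - - a0 / Ps = (a1 + a0) / Ps) by (field; lra).
  rewrite D in U.
  assert (K1 : (a1 + a0) / Ps <= PI/Ps).
  { unfold Rdiv. apply Rmult_le_compat_r. left; apply Rinv_0_lt_compat; lra. lra. }
  assert (K2 : PI/Ps - /Z1 - /Z0 <= (a1 + a0) / Ps).
  { replace (PI/Ps - /Z1 - /Z0) with ((PI/2 - Ps * /Z1 + (PI/2 - Ps * /Z0)) * /Ps) by (field; lra).
    unfold Rdiv. apply Rmult_le_compat_r. left; apply Rinv_0_lt_compat; lra. lra. }
  apply Rabs_le. unfold Rdiv in *. lra.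
Qed.

Lemma sum_swap (a : nat -> nat -> R) n m :
  sum_f_R0 (fun k => sum_f_R0 (fun l => a k l) m) n = sum_f_R0 (fun l => sum_f_R0 (fun k => a k l) n) m.
Proof.
  induction n as [|n IH]; simpl. reflexivity.
  rewrite IH. rewrite <- sum_plus. reflexivity.
Qed.

Lemma sum_lin3 (X Y Z : nat -> R) a b c N :
  sum_f_R0 (fun l => a * X l + b * Y l + c * Z l) N =
  a * sum_f_R0 X N + b * sum_f_R0 Y N + c * sum_f_R0 Z N.
Proof.
  rewrite !sum_plus, !scal_sum. f_equal; [f_equal|]; apply sum_eq; intros; ring.
Qed.

Definition Sg (Ps Ph Om eps : R) (my mz : nat) : R :=
  sum_f_R0 (fun k => sum_f_R0 (fun l =>
     eps^2 * (Ps*(Ps^2 + ((INR l - INR mz)*eps - Om)^2)/(4*PI)) *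
       f1 (((INR l - INR mz)*eps - Om)^2 + Ps^2) ((INR k - INR my)*eps - Ph)) (2*mz)) (2*my).

Lemma point_bnd Ps eps z Y1 Y0 T : 0 < Ps -> 0 < eps -> 0 < Y1 -> 0 < Y0 ->
  let a2 := z^2 + Ps^2 in
  Rabs (T - 4/(3*a2^2)) <= eps * / (sqrt a2)^5 + 2/(3*a2*(a2+Y1^2)) + 2/(3*a2*(a2+Y0^2)) ->
  Rabs (eps * (Ps*(Ps^2 + z^2)/(4*PI)) * T - eps * (Ps/(3*PI)) * f2 Ps z)
  <= eps * (eps/(4*PI)) * f2 Ps z + eps * (Ps/(6*PI)) * f2 Y1 z + eps * (Ps/(6*PI)) * f2 Y0 z.
Proof.
  intros HP He H1 H0 a2 H.
  assert (Ha : Ps^2 <= a2) by (unfold a2; nra).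
  assert (Ha0 : 0 < a2) by nra.
  assert (PIp : 0 < PI) by exact PI_RGT_0.
  assert (Hs : Ps <= sqrt a2).
  { rewrite <- (sqrt_pow2 Ps) by lra. apply sqrt_le_1_alt. lra. }
  assert (Hs2 : sqrt a2 * sqrt a2 = a2) by (apply sqrt_sqrt; lra).
  assert (E5 : (sqrt a2)^5 = a2^2 * sqrt a2) by (replace (a2^2) with ((sqrt a2 * sqrt a2)^2) by (rewrite Hs2; ring); ring).
  assert (c_eq : Ps*(Ps^2 + z^2)/(4*PI) = Ps * a2 / (4*PI)). { unfold a2, Rdiv. ring. }
  rewrite c_eq.
  assert (F : f2 Ps z = / a2) by (unfold f2, a2; reflexivity).
  rewrite F.
  set (c := Ps * a2 / (4*PI)).
  assert (Hc : 0 < c) by (unfold c; apply Rdiv_lt_0_compat; nra).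
  replace (eps * c * T - eps * (Ps / (3 * PI)) * / a2) with (eps * c * (T - 4/(3*a2^2)))
    by (unfold c; field; split; lra).
  rewrite Rabs_mult, Rabs_mult, (Rabs_right eps), (Rabs_right c) by lra.
  assert (B1 : c * (eps * / (sqrt a2)^5) <= eps / (4*PI) * / a2).
  { rewrite E5. unfold c. 
    replace (Ps * a2 / (4 * PI) * (eps * / (a2 ^ 2 * sqrt a2))) with (eps/(4*PI) * / a2 * (Ps / sqrt a2))
      by (field; split; nra).
    assert (Ps / sqrt a2 <= 1).
    { apply (Rmult_le_reg_r (sqrt a2)). nra. unfold Rdiv. rewrite Rmult_assoc, Rinv_l by nra. lra. }
    assert (0 <= eps/(4*PI) * / a2).
    { apply Rmult_le_pos. left; apply Rdiv_lt_0_compat; lra. left; apply Rinv_0_lt_compat; lra. }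
    nra. }
  assert (BY : forall Y, 0 < Y -> c * (2/(3*a2*(a2+Y^2))) <= Ps/(6*PI) * f2 Y z).
  { intros Y HY. unfold c, f2.
    replace (Ps * a2 / (4 * PI) * (2 / (3 * a2 * (a2 + Y ^ 2)))) with (Ps/(6*PI) * / (a2 + Y^2))
      by (field; repeat split; nra).
    apply Rmult_le_compat_l. left; apply Rdiv_lt_0_compat; lra.
    apply Rinv_le_contravar. nra. unfold a2; nra. }
  pose proof (BY Y1 H1). pose proof (BY Y0 H0).
  assert (c * Rabs (T - 4 / (3 * a2 ^ 2)) <= eps / (4 * PI) * / a2 + Ps / (6 * PI) * f2 Y1 z + Ps / (6 * PI) * f2 Y0 z).
  { apply Rle_trans with (c * (eps * / sqrt a2 ^ 5 + 2 / (3 * a2 * (a2 + Y1 ^ 2)) + 2 / (3 * a2 * (a2 + Y0 ^ 2)))).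
    apply Rmult_le_compat_l; lra. lra. }
  replace (eps * c * Rabs (T - 4 / (3 * a2 ^ 2))) with (eps * (c * Rabs (T - 4 / (3 * a2 ^ 2)))) by ring.
  nra.
Qed.

Lemma Sg_bound Ps Ph Om eps my mz : 0 < Ps -> 0 < eps ->
  0 < INR my * eps - Ph -> 0 < INR my * eps + Ph ->
  0 < INR mz * eps - Om -> 0 < INR mz * eps + Om ->
  Rabs (Sg Ps Ph Om eps my mz - 1/3) <=
    eps/(4*PI) * (PI/Ps + eps/Ps^2)
  + Ps/(6*PI) * (PI/(INR my * eps - Ph) + eps/(INR my * eps - Ph)^2)
  + Ps/(6*PI) * (PI/(INR my * eps + Ph) + eps/(INR my * eps + Ph)^2)
  + Ps/(3*PI) * (eps/Ps^2 + / (INR mz * eps - Om) + / (INR mz * eps + Om)).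
Proof.
  intros HP He H1 H2 H3 H4.
  assert (PIp : 0 < PI) by exact PI_RGT_0.
  set (Y1 := INR my * eps - Ph) in *. set (Y0 := INR my * eps + Ph) in *.
  set (zz := fun l => (INR l - INR mz) * eps - Om).
  set (T := fun l => eps * sum_f_R0 (fun k => f1 (zz l ^ 2 + Ps^2) ((INR k - INR my)*eps - Ph)) (2*my)).
  set (A := fun l => eps * (Ps*(Ps^2 + zz l^2)/(4*PI)) * T l).
  set (B := fun l => eps * (Ps/(3*PI)) * f2 Ps (zz l)).
  assert (ES : Sg Ps Ph Om eps my mz = sum_f_R0 A (2*mz)).
  { unfold Sg. rewrite sum_swap. apply sum_eq. intros l _. unfold A, T, zz.
    match goal with |- sum_f_R0 ?F ?n = ?e * ?c * (?e2 * sum_f_R0 ?G ?n) =>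
      transitivity (sum_f_R0 (fun k => G k * (e*c*e2)) n) end.
    apply sum_eq; intros; ring. rewrite <- scal_sum. ring. }
  assert (EB : sum_f_R0 B (2*mz) = Ps/(3*PI) * (eps * sum_f_R0 (fun l => f2 Ps ((INR l - INR mz) * eps - Om)) (2*mz))).
  { rewrite !scal_sum. apply sum_eq. intros. unfold B, zz. ring. }
  assert (Main := zsum_main Ps eps mz Om HP He H3 H4).
  assert (Diff : Rabs (sum_f_R0 A (2*mz) - sum_f_R0 B (2*mz)) <=
     eps/(4*PI) * (PI/Ps + eps/Ps^2) + Ps/(6*PI) * (PI/Y1 + eps/Y1^2) + Ps/(6*PI) * (PI/Y0 + eps/Y0^2)).
  { rewrite <- minus_sum. eapply Rle_trans. apply Rsum_abs.
    eapply Rle_trans.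
    { apply sum_Rle. intros l _. unfold A, B.
      apply (point_bnd Ps eps (zz l) Y1 Y0 (T l) HP He H1 H2).
      unfold T. apply ysum; [nra|lra|left; exact H1|left; exact H2]. }
    rewrite (sum_lin3 (fun l => f2 Ps (zz l)) (fun l => f2 Y1 (zz l)) (fun l => f2 Y0 (zz l))).
    assert (Z : forall b, 0 < b -> eps * sum_f_R0 (fun l => f2 b (zz l)) (2*mz) <= PI/b + eps/b^2).
    { intros b Hb. 
      replace (sum_f_R0 (fun l => f2 b (zz l)) (2*mz)) with
        (sum_f_R0 (fun l => f2 b ((-(INR mz * eps) - Om) + INR l * eps)) (2*mz)).
      apply zsum_ub; auto. apply sum_eq. intros. unfold zz. f_equal. ring. }
    pose proof (Z Ps HP). pose proof (Z Y1 H1). pose proof (Z Y0 H2).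
    assert (0 < eps/(4*PI)) by (apply Rdiv_lt_0_compat; lra).
    assert (0 < Ps/(6*PI)) by (apply Rdiv_lt_0_compat; lra).
    set (s1 := sum_f_R0 (fun l => f2 Ps (zz l)) (2*mz)) in *.
    set (s2 := sum_f_R0 (fun l => f2 Y1 (zz l)) (2*mz)) in *.
    set (s3 := sum_f_R0 (fun l => f2 Y0 (zz l)) (2*mz)) in *.
    replace (eps * (eps / (4 * PI)) * s1 + eps * (Ps / (6 * PI)) * s2 + eps * (Ps / (6 * PI)) * s3)
      with (eps / (4 * PI) * (eps * s1) + Ps / (6 * PI) * (eps * s2) + Ps / (6 * PI) * (eps * s3)) by ring.
    apply Rplus_le_compat; [apply Rplus_le_compat|]; apply Rmult_le_compat_l; lra. }
  assert (Last : Rabs (sum_f_R0 B (2*mz) - 1/3) <= Ps/(3*PI) * (eps/Ps^2 + / (INR mz * eps - Om) + / (INR mz * eps + Om))).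
  { rewrite EB. 
    replace (Ps / (3 * PI) * (eps * sum_f_R0 (fun l : nat => f2 Ps ((INR l - INR mz) * eps - Om)) (2 * mz)) - 1 / 3)
      with (Ps / (3 * PI) * (eps * sum_f_R0 (fun l : nat => f2 Ps ((INR l - INR mz) * eps - Om)) (2 * mz) - PI/Ps))
      by (field; lra).
    rewrite Rabs_mult, Rabs_right. apply Rmult_le_compat_l. left; apply Rdiv_lt_0_compat; lra. exact Main.
    left; apply Rdiv_lt_0_compat; lra. }
  rewrite ES.
  replace (sum_f_R0 A (2 * mz) - 1 / 3) with ((sum_f_R0 A (2*mz) - sum_f_R0 B (2*mz)) + (sum_f_R0 B (2*mz) - 1/3)) by ring.
  eapply Rle_trans. apply Rabs_triang. lra.
Qed.

Lemma inv_le_K Y K : 0 < K -> K <= Y -> / Y <= / K.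
Proof. intros. apply Rinv_le_contravar; lra. Qed.

Lemma Sg_lim Ps Ph Om dl : 0 < Ps -> 0 < dl ->
  exists rho, 0 < rho /\ forall eps, 0 < eps -> eps < rho ->
  exists M : nat, forall my mz : nat, (M <= my)%nat -> (M <= mz)%nat ->
  Rabs (Sg Ps Ph Om eps my mz - 1/3) < dl.
Proof.
  intros HP Hd.
  assert (PIp : 2 < PI) by (pose proof PI2_1; lra).
  assert (Pd : 0 < Ps*dl/2) by (apply Rdiv_lt_0_compat; nra).
  exists (Rmin 1 (Rmin Ps (Ps*dl/2))). split.
  { apply Rmin_pos. lra. apply Rmin_pos. lra. lra. }
  intros eps He Hr.
  assert (E1 : eps < 1) by (eapply Rlt_le_trans; [exact Hr| apply Rmin_l]).
  assert (E2 : eps < Ps) by (eapply Rlt_le_trans; [exact Hr| eapply Rle_trans; [apply Rmin_r| apply Rmin_l]]).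
  assert (E3 : eps < Ps*dl/2) by (eapply Rlt_le_trans; [exact Hr| eapply Rle_trans; [apply Rmin_r| apply Rmin_r]]).
  assert (Q : 0 < 3*Ps/dl) by (apply Rdiv_lt_0_compat; lra).
  set (K := 1 + 3*Ps/dl).
  assert (HK1 : 1 <= K) by (unfold K; lra).
  assert (HK2 : Ps / K <= dl/3).
  { assert (/K <= / (3*Ps/dl)) by (apply Rinv_le_contravar; unfold K; lra).
    replace (dl/3) with (Ps * / (3*Ps/dl)) by (field; lra).
    unfold Rdiv. apply Rmult_le_compat_l; lra. }
  destruct (INR_archimed eps (K + Rabs Ph + Rabs Om) (Rlt_gt _ _ He)) as [M HM].
  exists M. intros my mz Hmy Hmz.
  assert (Lmy : INR M * eps <= INR my * eps) by (apply Rmult_le_compat_r; [lra| apply le_INR; exact Hmy]).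
  assert (Lmz : INR M * eps <= INR mz * eps) by (apply Rmult_le_compat_r; [lra| apply le_INR; exact Hmz]).
  pose proof (Rle_abs Ph). pose proof (Rle_abs Om). pose proof (Rabs_pos Ph). pose proof (Rabs_pos Om).
  pose proof (Rle_abs (-Ph)). pose proof (Rle_abs (-Om)). rewrite Rabs_Ropp in *.
  assert (Y1 : K <= INR my * eps - Ph) by lra.
  assert (Y0 : K <= INR my * eps + Ph) by lra.
  assert (Z1 : K <= INR mz * eps - Om) by lra.
  assert (Z0 : K <= INR mz * eps + Om) by lra.
  eapply Rle_lt_trans. apply Sg_bound; lra.
  set (y1 := INR my * eps - Ph) in *. set (y0 := INR my * eps + Ph) in *.
  set (z1 := INR mz * eps - Om) in *. set (z0 := INR mz * eps + Om) in *.
  assert (T1 : eps/(4*PI) * (PI/Ps + eps/Ps^2) <= eps/Ps * (1/4 + 1/8)).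
  { replace (eps/(4*PI) * (PI/Ps + eps/Ps^2)) with (eps/Ps * (1/4 + (eps/Ps) * /(4*PI))) by (field; lra).
    apply Rmult_le_compat_l. left; apply Rdiv_lt_0_compat; lra.
    assert (eps/Ps <= 1). { apply (Rmult_le_reg_r Ps). lra. field_simplify; lra. }
    assert (/(4*PI) <= /8) by (apply Rinv_le_contravar; lra).
    assert (0 <= eps/Ps) by (left; apply Rdiv_lt_0_compat; lra).
    assert (0 <= /(4*PI)) by (left; apply Rinv_0_lt_compat; lra).
    nra. }
  assert (T4 : Ps/(3*PI) * (eps/Ps^2) <= eps/Ps * (1/6)).
  { replace (Ps/(3*PI) * (eps/Ps^2)) with (eps/Ps * /(3*PI)) by (field; lra).
    apply Rmult_le_compat_l. left; apply Rdiv_lt_0_compat; lra.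
    replace (1/6) with (/6) by field. apply Rinv_le_contravar; lra. }
  assert (TY : forall y, K <= y -> Ps/(6*PI) * (PI/y + eps/y^2) <= Ps * (/K * /3)).
  { intros y Hy.
    assert (Iy : /y <= /K) by (apply inv_le_K; lra).
    assert (Iy2 : /y^2 <= /K) by (apply inv_le_K; [lra| nra]).
    replace (Ps/(6*PI) * (PI/y + eps/y^2)) with (Ps * (/6 * /y + (eps * /(6*PI)) * /y^2)) by (field; split; lra).
    apply Rmult_le_compat_l. lra.
    assert (eps * /(6*PI) <= /6).
    { assert (/(6*PI) <= /6) by (apply Rinv_le_contravar; lra).
      assert (0 <= /(6*PI)) by (left; apply Rinv_0_lt_compat; lra). nra. }
    assert (0 <= eps * /(6*PI)) by (apply Rmult_le_pos; [lra| left; apply Rinv_0_lt_compat; lra]).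
    assert (0 <= /y^2) by (left; apply Rinv_0_lt_compat; nra).
    assert (0 <= /K) by (left; apply Rinv_0_lt_compat; lra).
    nra. }
  assert (TZ : Ps/(3*PI) * (/z1 + /z0) <= Ps * (/K * /3)).
  { assert (/z1 <= /K) by (apply inv_le_K; lra). assert (/z0 <= /K) by (apply inv_le_K; lra).
    replace (Ps/(3*PI) * (/z1 + /z0)) with (Ps * ((/z1 + /z0) * /(3*PI))) by (field; lra).
    apply Rmult_le_compat_l. lra.
    assert (/(3*PI) <= /6) by (apply Rinv_le_contravar; lra).
    assert (0 <= /(3*PI)) by (left; apply Rinv_0_lt_compat; lra).
    assert (0 <= /z1) by (left; apply Rinv_0_lt_compat; lra).
    assert (0 <= /z0) by (left; apply Rinv_0_lt_compat; lra).
    assert (0 <= /K) by (left; apply Rinv_0_lt_compat; lra).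
    nra. }
  pose proof (TY y1 Y1). pose proof (TY y0 Y0).
  assert (KK : Ps * (/K * /3) = Ps/K * (1/3)) by (field; lra).
  assert (Ed : eps / Ps < dl/2).
  { apply (Rmult_lt_reg_r Ps). lra. field_simplify; lra. }
  replace (Ps / (3 * PI) * (eps / Ps ^ 2 + / z1 + / z0)) with
    (Ps/(3*PI) * (eps/Ps^2) + Ps/(3*PI) * (/z1 + /z0)) by ring.
  lra.
Qed.

Lemma entry_eq A d lambda r th ph (ny nz : R) : 0 < A -> 0 < d -> 0 < r -> 0 < Psi th ph ->
  Cmod (h_entry A d lambda r th ph ny nz) ^ 2 =
  (d/r)^2 * (Psi th ph * (Psi th ph ^2 + (nz * (d/r) - Omega th)^2)/(4*PI)) *
     f1 ((nz * (d/r) - Omega th)^2 + Psi th ph ^2) (ny * (d/r) - Phi th ph) * (A/d^2).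
Proof.
  intros HA Hd Hr HP.
  assert (PIp : 0 < PI) by exact PI_RGT_0.
  unfold h_entry, Cmod, elem_dist, f1. cbv zeta. cbn [fst snd].
  set (Ps := Psi th ph) in *. set (y := ny * (d/r) - Phi th ph). set (z := nz * (d/r) - Omega th).
  replace (y ^ 2 + z ^ 2 + Ps ^ 2) with (y^2 + (z^2 + Ps^2)) by ring.
  assert (Hq : 0 < y^2 + (z^2 + Ps^2)) by nra.
  assert (Hs : 0 < sqrt (y^2 + (z^2 + Ps^2))) by (apply sqrt_lt_R0; lra).
  set (s := sqrt (y^2 + (z^2 + Ps^2))) in *.
  set (ph' := - (2 * PI / lambda) * (r * s)).
  set (X := A * (r ^ 3 * Ps ^ 3 + r * Ps * (r * Omega th - nz * d) ^ 2) / (4 * PI * (r * s) ^ 5)).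
  assert (HX : 0 <= X).
  { unfold X. apply Rmult_le_pos.
    apply Rmult_le_pos. lra. assert (0 <= r * Ps * (r * Omega th - nz * d) ^ 2) by (apply Rmult_le_pos; [nra| apply pow2_ge_0]).
    assert (0 < r^3 * Ps^3) by (apply Rmult_lt_0_compat; apply pow_lt; lra). lra.
    left. apply Rinv_0_lt_compat. apply Rmult_lt_0_compat. lra. apply pow_lt. nra. }
  rewrite pow2_sqrt.
  2: { apply Rplus_le_le_0_compat; apply pow2_ge_0. }
  replace ((sqrt X * cos ph') ^ 2 + (sqrt X * sin ph') ^ 2) with (sqrt X ^ 2 * (sin ph' ^2 + cos ph'^2)) by ring.
  replace (sin ph' ^2 + cos ph' ^2) with 1 by (rewrite <- (sin2_cos2 ph'); unfold Rsqr; ring).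
  rewrite Rmult_1_r. rewrite pow2_sqrt by exact HX.
  unfold X. replace (r * Omega th - nz * d) with (-(r*z)) by (unfold z; field; lra).
  field. repeat split; lra.
Qed.

Lemma hnorm_Sg A d lambda r th ph my mz : 0 < A -> 0 < d -> 0 < r -> 0 < Psi th ph ->
  h_norm2 A d lambda r th ph my mz = A/d^2 * Sg (Psi th ph) (Phi th ph) (Omega th) (d/r) my mz.
Proof.
  intros HA Hd Hr HP. unfold h_norm2, Sg. rewrite (scal_sum _ (2*my) (A/d^2)). apply sum_eq. intros k _.
  rewrite Rmult_comm, scal_sum. apply sum_eq. intros l _. rewrite entry_eq by auto. reflexivity.
Qed.

Lemma ln_close Q0 g : 0 < Q0 -> 0 < g -> exists tau, 0 < tau /\ forall Q, Rabs (Q - Q0) < tau -> Rabs (ln Q - ln Q0) < g.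
Proof.
  intros HQ Hg.
  assert (e1 : exp (-g) < 1) by (rewrite <- exp_0; apply exp_increasing; lra).
  assert (e2 : 1 < exp g) by (rewrite <- exp_0; apply exp_increasing; lra).
  assert (e0 : 0 < exp (-g)) by apply exp_pos.
  exists (Q0 * Rmin (1 - exp (-g)) (exp g - 1)). split.
  { apply Rmult_lt_0_compat. lra. apply Rmin_pos; lra. }
  intros Q HQQ. apply Rabs_def2 in HQQ. destruct HQQ as [a1 a2].
  pose proof (Rmin_l (1 - exp (-g)) (exp g - 1)). pose proof (Rmin_r (1 - exp (-g)) (exp g - 1)).
  assert (b1 : Q < Q0 * exp g) by nra.
  assert (b2 : Q0 * exp (-g) < Q) by nra.
  assert (Qp : 0 < Q) by nra.
  apply ln_increasing in b1; [|lra]. apply ln_increasing in b2; [|nra].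
  rewrite ln_mult, ln_exp in b1 by (try lra; apply exp_pos).
  rewrite ln_mult, ln_exp in b2 by (try lra; apply exp_pos).
  apply Rabs_def1; lra.
Qed.

Lemma Q_lip c pc u v u0 v0 eta : 0 < c -> 0 < pc -> 0 <= u -> 0 <= v -> 0 <= u0 -> 0 <= v0 ->
  0 < eta <= 1 -> Rabs (u - u0) <= eta -> Rabs (v - v0) <= eta ->
  Rabs (c * v^2 / (1 + pc * u) - c * v0^2 / (1 + pc * u0)) <= c * eta * (2 * v0 + 1 + v0^2 * pc).
Proof.
  intros Hc Hp Hu Hv Hu0 Hv0 He Hdu Hdv.
  assert (P1 : 1 <= 1 + pc * u) by nra. assert (P0 : 1 <= 1 + pc * u0) by nra.
  replace (c * v^2 / (1 + pc * u) - c * v0^2 / (1 + pc * u0)) with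
    (c * ((v^2 - v0^2) / (1 + pc*u)) + c * v0^2 * (pc * (u0 - u) / ((1 + pc*u) * (1 + pc*u0)))) by (field; lra).
  eapply Rle_trans. apply Rabs_triang.
  rewrite !Rabs_mult. rewrite (Rabs_right c) by lra. rewrite (Rabs_right (v0^2)) by (apply Rle_ge, pow2_ge_0).
  assert (A1 : Rabs ((v^2 - v0^2) / (1 + pc*u)) <= eta * (2*v0 + 1)).
  { unfold Rdiv. rewrite Rabs_mult. rewrite Rabs_inv. rewrite (Rabs_right (1 + pc*u)) by lra.
    replace (v^2 - v0^2) with ((v - v0) * (v + v0)) by ring. rewrite Rabs_mult.
    rewrite (Rabs_right (v + v0)) by lra.
    assert (/ (1 + pc*u) <= 1) by (rewrite <- Rinv_1; apply Rinv_le_contravar; lra).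
    assert (0 < / (1 + pc*u)) by (apply Rinv_0_lt_compat; lra).
    assert (Hdv2 := Hdv); apply Rabs_le_between in Hdv2.
    pose proof (Rabs_pos (v - v0)). 
    assert (Rabs (v - v0) * (v + v0) <= eta * (2*v0+1)).
    { apply Rmult_le_compat; lra. }
    assert (0 <= Rabs (v - v0) * (v + v0)) by (apply Rmult_le_pos; lra). nra. }
  assert (A2 : Rabs (pc * (u0 - u) / ((1 + pc*u) * (1 + pc*u0))) <= pc * eta).
  { unfold Rdiv. rewrite !Rabs_mult. rewrite Rabs_inv. rewrite Rabs_mult.
    rewrite (Rabs_right pc), (Rabs_right (1 + pc*u)), (Rabs_right (1 + pc*u0)) by lra.
    rewrite Rabs_minus_sym.
    assert (/ ((1 + pc*u) * (1 + pc*u0)) <= 1) by (rewrite <- Rinv_1; apply Rinv_le_contravar; nra).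
    assert (0 < / ((1 + pc*u) * (1 + pc*u0))) by (apply Rinv_0_lt_compat; nra).
    pose proof (Rabs_pos (u - u0)).
    assert (pc * Rabs (u - u0) <= pc * eta) by (apply Rmult_le_compat_l; lra).
    assert (0 <= pc * Rabs (u - u0)) by nra.
    nra. }
  assert (c * Rabs ((v ^ 2 - v0 ^ 2) / (1 + pc * u)) <= c * (eta * (2 * v0 + 1))) by (apply Rmult_le_compat_l; lra).
  assert (c * v0 ^ 2 * Rabs (pc * (u0 - u) / ((1 + pc * u) * (1 + pc * u0))) <= c * v0^2 * (pc * eta)).
  { apply Rmult_le_compat_l. apply Rmult_le_pos; [lra| apply pow2_ge_0]. exact A2. }
  nra.
Qed.

Lemma rate_cont (L : nat) pc ps alphas zeta e : (0 < L)%nat -> 0 < pc -> 0 < ps -> 0 < alphas -> 0 < zeta -> 0 < e ->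
  exists eta, 0 < eta /\ eta <= zeta/3 /\ forall u v, Rabs (u - zeta/3) < eta -> Rabs (v - zeta/3) < eta ->
  Rabs (R_cs_c L pc ps alphas u v - / INR L * log2 (1 + ps * INR L * alphas * zeta ^ 2 / (9 + 3 * pc * zeta))) < e.
Proof.
  intros HL Hpc Hps Ha Hz He.
  assert (HLr : 0 < INR L) by (apply lt_0_INR; exact HL).
  assert (Hl2 : 0 < ln 2) by (rewrite <- ln_1; apply ln_increasing; lra).
  set (c := ps * INR L * alphas).
  assert (Hc : 0 < c) by (unfold c; apply Rmult_lt_0_compat; [apply Rmult_lt_0_compat|]; lra).
  set (v0 := zeta/3).
  assert (Hv0 : 0 < v0) by (unfold v0; lra).
  set (Q0 := 1 + c * v0^2 / (1 + pc * v0)).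
  assert (HQ0 : 0 < Q0).
  { unfold Q0. assert (0 < c * v0^2 / (1 + pc * v0)) by (apply Rdiv_lt_0_compat; [apply Rmult_lt_0_compat; [lra| apply pow_lt; lra]| nra]). lra. }
  assert (Hg : 0 < e * INR L * ln 2) by (apply Rmult_lt_0_compat; [apply Rmult_lt_0_compat|]; lra).
  destruct (ln_close Q0 _ HQ0 Hg) as [tau [Ht Htau]].
  set (K := 2 * v0 + 1 + v0^2 * pc).
  assert (HK : 0 < K) by (unfold K; nra).
  assert (Hq : 0 < tau / (2 * c * K)) by (apply Rdiv_lt_0_compat; [lra| nra]).
  exists (Rmin v0 (Rmin 1 (tau / (2 * c * K)))).
  pose proof (Rmin_l v0 (Rmin 1 (tau / (2 * c * K)))).
  pose proof (Rmin_r v0 (Rmin 1 (tau / (2 * c * K)))).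
  pose proof (Rmin_l 1 (tau / (2 * c * K))). pose proof (Rmin_r 1 (tau / (2 * c * K))).
  set (eta := Rmin v0 (Rmin 1 (tau / (2 * c * K)))) in *.
  assert (Heta : 0 < eta) by (apply Rmin_pos; [lra| apply Rmin_pos; lra]).
  split; [exact Heta| split; [exact H|]].
  intros u v Hu Hv.
  assert (Hu2 := Hu); assert (Hv2 := Hv). apply Rabs_def2 in Hu2. apply Rabs_def2 in Hv2.
  assert (u0p : 0 <= u) by (unfold v0 in *; lra). assert (v0p : 0 <= v) by (unfold v0 in *; lra).
  assert (Lp := Q_lip c pc u v v0 v0 eta Hc Hpc u0p v0p (Rlt_le _ _ Hv0) (Rlt_le _ _ Hv0)
     (conj Heta (Rle_trans _ _ _ H0 H1)) (Rlt_le _ _ Hu) (Rlt_le _ _ Hv)).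
  fold K in Lp.
  assert (c * eta * K <= tau / 2).
  { assert (eta <= tau / (2*c*K)) by lra.
    replace (tau/2) with (c * (tau / (2*c*K)) * K) by (field; lra).
    apply Rmult_le_compat_r. lra. apply Rmult_le_compat_l; lra. }
  unfold R_cs_c, log2.
  rewrite pow2_sqrt by exact u0p.
  replace (sqrt v ^ 4) with ((sqrt v ^ 2)^2) by ring. rewrite pow2_sqrt by exact v0p.
  replace (ps * INR L * alphas * v^2 / (1 + pc * u)) with (c * v^2 / (1 + pc * u)) by reflexivity.
  replace (1 + c * zeta ^ 2 / (9 + 3 * pc * zeta)) with Q0
    by (unfold Q0, c, v0; field; nra).
  assert (HQ := Htau (1 + c * v^2 / (1 + pc * u))).
  replace (1 + c * v ^ 2 / (1 + pc * u) - Q0) with (c * v ^ 2 / (1 + pc * u) - c * v0 ^ 2 / (1 + pc * v0)) in HQ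
    by (unfold Q0; ring).
  specialize (HQ ltac:(lra)).
  replace (/ INR L * (ln (1 + c * v ^ 2 / (1 + pc * u)) / ln 2) - / INR L * (ln Q0 / ln 2))
    with ((ln (1 + c * v ^ 2 / (1 + pc * u)) - ln Q0) / (INR L * ln 2)) by (field; lra).
  unfold Rdiv. rewrite Rabs_mult, Rabs_inv, (Rabs_right (INR L * ln 2)) by nra.
  apply (Rmult_lt_reg_r (INR L * ln 2)). nra.
  rewrite Rmult_assoc, Rinv_l by nra. nra.
Qed.

Lemma Psi_pos th ph : 0 < th < PI -> - (PI / 2) < ph < PI / 2 -> 0 < Psi th ph.
Proof.
  intros [a b] [c d]. unfold Psi. apply Rmult_lt_0_compat. apply sin_gt_0; auto. apply cos_gt_0; auto.
Qed.

Lemma scale_close zeta S eta : 0 < zeta -> Rabs (S - 1/3) < eta / zeta -> Rabs (zeta * S - zeta/3) < eta.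
Proof.
  intros Hz H. replace (zeta * S - zeta/3) with (zeta * (S - 1/3)) by field.
  rewrite Rabs_mult, (Rabs_right zeta) by lra.
  apply (Rmult_lt_compat_l zeta) in H; [|lra]. replace (zeta * (eta/zeta)) with eta in H by (field; lra). lra.
Qed.

Theorem corollary11 (L : nat) (pc ps alphas A d lambda : R)
  (thc phc ths phs : R) :
  (0 < L)%nat -> 0 < pc -> 0 < ps -> 0 < alphas ->
  0 < A -> 0 < d -> sqrt A < d -> 0 < lambda ->
  0 < thc < PI -> - (PI / 2) < phc < PI / 2 ->
  0 < ths < PI -> - (PI / 2) < phs < PI / 2 ->
  let zeta := A / d ^ 2 in
  forall e : R, 0 < e ->
  exists rho : R, 0 < rho /\
  forall rc rs : R, 0 < rc -> 0 < rs -> d / rc < rho -> d / rs < rho ->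
  exists M : nat, forall my mz : nat, (M <= my)%nat -> (M <= mz)%nat ->
    Rabs (R_cs_c L pc ps alphas
            (h_norm2 A d lambda rc thc phc my mz)
            (h_norm2 A d lambda rs ths phs my mz)
          - / INR L * log2 (1 + ps * INR L * alphas * zeta ^ 2 / (9 + 3 * pc * zeta)))
    < e.
Proof.
  intros HL Hpc Hps Ha HA Hd HAd Hl Hthc Hphc Hths Hphs zeta e He.
  assert (Hz : 0 < zeta) by (unfold zeta; apply Rdiv_lt_0_compat; [lra| apply pow_lt; lra]).
  pose proof (Psi_pos _ _ Hthc Hphc) as Pc. pose proof (Psi_pos _ _ Hths Hphs) as Ps.
  destruct (rate_cont L pc ps alphas zeta e HL Hpc Hps Ha Hz He) as [eta [Heta [_ Hcont]]].
  assert (Hdl : 0 < eta / zeta) by (apply Rdiv_lt_0_compat; lra).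
  destruct (Sg_lim _ (Phi thc phc) (Omega thc) _ Pc Hdl) as [r1 [Hr1 H1]].
  destruct (Sg_lim _ (Phi ths phs) (Omega ths) _ Ps Hdl) as [r2 [Hr2 H2]].
  exists (Rmin r1 r2). split. apply Rmin_pos; lra.
  intros rc rs Hrc Hrs Hec Hes.
  pose proof (Rmin_l r1 r2). pose proof (Rmin_r r1 r2).
  destruct (H1 (d/rc)) as [M1 HM1]. apply Rdiv_lt_0_compat; lra. lra.
  destruct (H2 (d/rs)) as [M2 HM2]. apply Rdiv_lt_0_compat; lra. lra.
  exists (Nat.max M1 M2). intros my mz Hmy Hmz.
  rewrite !hnorm_Sg by lra.
  apply Hcont; apply scale_close; auto.
  - apply HM1; lia.
  - apply HM2; lia.
Qed.
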